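(* Let $\mathcal{X}$ be a real Hilbert space, let $\mathbb{A},\mathbb{B},\mathbb{C}:\mathcal{X}\to 2^{\mathcal{X}}$ be maximal monotone operators with $\mathbb{C}$ $\beta$-cocoercive ($\beta>0$), let $\gamma\in(0,2\beta]$, and let $$T=\mathbb{J}_{\gamma\mathbb{C}}\circ\big(\mathbb{J}_{\gamma \mathbb{A}}\circ(2\mathbb{J}_{\gamma \mathbb{B}}-I-\gamma \mathbb{C}\mathbb{J}_{\gamma \mathbb{B}})+\gamma \mathbb{C}\mathbb{J}_{\gamma \mathbb{B}}\big)+ (I-\mathbb{J}_{\gamma \mathbb{B}}).$$ Assume $T$ is $a$-averaged with $a=\frac{2\beta}{4\beta-\gamma}<1$. Let $z^0\in\mathcal{X}$ and let $(z^j)_{j\ge0}$ be generated by: for $k=0,1,\dots$, $x^k_{\mathbb{B}}=\mathbb{J}_{\gamma\mathbb{B}}(z^k)$, $x^k_{\mathbb{A}}=\mathbb{J}_{\gamma\mathbb{A}}(2x^k_{\mathbb{B}}-z^k-\gamma\mathbb{C}x^k_{\mathbb{B}})$, $x^k_{\mathbb{C}}=\mathbb{J}_{\gamma\mathbb{C}}(x^k_{\mathbb{A}}+\gamma\mathbb{C}x^k_{\mathbb{B}})$, $z^{k+1}=z^k+\lambda_k(x^k_{\mathbb{C}}-x^k_{\mathbb{B}})$, with $\lambda_k\in(0,(4\beta-\gamma)/(2\beta))$. Let $z^*$ be a fixed point of $T$ and $x^*=\mathbb{J}_{\gamma\mathbb{B}}(z^* )$. Then $(x^j_{\mathbb{A}})_{j\ge0}$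 and $(x^j_{\mathbb{B}})_{j\ge0}$ are contained in the closed ball $\overline{B}\big(x^*,(1+\gamma/\beta)\|z^0-z^*\|\big)$.
   Context: $\mathbb{J}_M=(I+M)^{-1}$ is the resolvent of $M$. $\mathbb{C}$ is $\beta$-cocoercive if $\langle u-v,x-y\rangle\ge\beta\|u-v\|^2$ for all $u\in\mathbb{C}x,v\in\mathbb{C}y$. A map $T$ is $a$-averaged if $T=(1-a)I+aN$ for some nonexpansive $N$. *)

(* Defs.v *)
From HB Require Import structures.
From mathcomp Require Import all_boot all_order all_algebra.
From mathcomp Require Import all_classical all_reals all_analysis.
Set Implicit Arguments. Unset Strict Implicit. Unset Printing Implicit Defensive.
Import Order.TTheory GRing.Theory Num.Theory.
Import numFieldNormedType.Exports.
Local Open Scope ring_scope.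
Local Open Scope classical_set_scope.

(* A real Hilbert space: a complete normed space V over R together with a
   symmetric bilinear form whose induced norm is the norm of V. *)
Definition is_inner_product (R : realType) (V : completeNormedModType R)
    (ip : V -> V -> R) : Prop :=
  [/\ forall x y, ip x y = ip y x,
      forall a x y z, ip (a *: x + y) z = a * ip x z + ip y z
    & forall x, ip x x = `|x| ^+ 2].

Definition monotone (R : realType) (V : completeNormedModType R)
    (ip : V -> V -> R) (A : V -> set V) : Prop :=
  forall x y u v, A x u -> A y v -> 0 <= ip (u - v) (x - y).

Definition maximal_monotone (R : realType) (V : completeNormedModType R)
    (ip : V -> V -> R) (A : V -> set V) : Prop :=
  monotone ip A /\
  forall B : V -> set V, monotone ip B ->
    (forall x u, A x u -> B x u) -> forall x u, B x u -> A x u.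

Definition cocoercive (R : realType) (V : completeNormedModType R)
    (ip : V -> V -> R) (beta : R) (A : V -> set V) : Prop :=
  forall x y u v, A x u -> A y v -> beta * `|u - v| ^+ 2 <= ip (u - v) (x - y).

(* J is the resolvent (I + g A)^{-1}, i.e. J x = p  iff  x \in p + g A p. *)
Definition is_resolvent (R : realType) (V : completeNormedModType R)
    (A : V -> set V) (g : R) (J : V -> V) : Prop :=
  forall x p, J x = p <-> exists u, A p u /\ x - p = g *: u.

Definition nonexpansive (R : realType) (V : completeNormedModType R)
    (N : V -> V) : Prop :=
  forall x y, `|N x - N y| <= `|x - y|.

Definition averaged (R : realType) (V : completeNormedModType R)
    (a : R) (T : V -> V) : Prop :=
  exists N : V -> V, nonexpansive N /\ forall x, T x = (1 - a) *: x + a *: N x.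

(* Main.v *)
Require Import Defs.
From HB Require Import structures.
From mathcomp Require Import all_boot all_order all_algebra.
From mathcomp Require Import all_classical all_reals all_analysis.
From mathcomp Require Import ring lra.
Set Implicit Arguments. Unset Strict Implicit. Unset Printing Implicit Defensive.
Import Order.TTheory GRing.Theory Num.Theory.
Import numFieldNormedType.Exports.
Local Open Scope ring_scope.
Local Open Scope classical_set_scope.

Definition ipl (R : realType) (V : lmodType R) (ip : V -> V -> R) :=
  (forall x y, ip x y = ip y x) /\
  (forall a x y z, ip (a *: x + y) z = a * ip x z + ip y z).

Lemma ipl_of (R : realType) (V : completeNormedModType R) (ip : V -> V -> R) :
  is_inner_product ip -> @ipl R V ip.
Proof. by case. Qed.

Lemma ip0l (R : realType) (V : lmodType R) (ip : V -> V -> R)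
  (Hip : ipl ip) z : ip 0 z = 0.
Proof.
case: Hip => _ Hl; have := Hl 1 0 0 z.
rewrite scale1r addr0 mul1r => h; lra.
Qed.

Lemma ipDl (R : realType) (V : lmodType R) (ip : V -> V -> R)
  (Hip : ipl ip) x y z : ip (x + y) z = ip x z + ip y z.
Proof. by case: Hip => _ Hl; rewrite -[x]scale1r Hl mul1r scale1r. Qed.

Lemma ipZl (R : realType) (V : lmodType R) (ip : V -> V -> R)
  (Hip : ipl ip) a x z : ip (a *: x) z = a * ip x z.
Proof.
have H0 := ip0l Hip z.
by case: Hip => _ Hl; rewrite -[a *: x]addr0 Hl H0 addr0.
Qed.

Lemma ipNl (R : realType) (V : lmodType R) (ip : V -> V -> R)
  (Hip : ipl ip) x z : ip (- x) z = - ip x z.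
Proof. by rewrite -scaleN1r (ipZl Hip) mulN1r. Qed.

Lemma ipBl (R : realType) (V : lmodType R) (ip : V -> V -> R)
  (Hip : ipl ip) x y z : ip (x - y) z = ip x z - ip y z.
Proof. by rewrite (ipDl Hip) (ipNl Hip). Qed.

Lemma ipC (R : realType) (V : lmodType R) (ip : V -> V -> R)
  (Hip : ipl ip) x z : ip x z = ip z x.
Proof. by case: Hip. Qed.

Lemma normDZ (R : realType) (V : completeNormedModType R) (ip : V -> V -> R)
  (Hip : is_inner_product ip) x y s :
  `|x + s *: y| ^+ 2 = `|x| ^+ 2 + 2 * s * ip x y + s ^+ 2 * `|y| ^+ 2.
Proof.
have Hn : forall v, ip v v = `|v| ^+ 2 by case: Hip.
have Hl := ipl_of Hip.
rewrite -!Hn.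
rewrite (ipDl Hl x (s *: y)) (ipC Hl x) (ipC Hl (s *: y)).
rewrite (ipDl Hl x (s *: y)) (ipDl Hl x (s *: y)).
rewrite !(ipZl Hl s y) (ipC Hl y (s *: y)) (ipZl Hl s y) (ipC Hl y x).
rewrite (ipC Hl x (s *: y)) (ipZl Hl s y) (ipC Hl y x) expr2; lra.
Qed.

Lemma sq_le (R : realType) (a b : R) : 0 <= b -> a ^+ 2 <= b ^+ 2 -> a <= b.
Proof. move=> b0 h; rewrite !expr2 in h; nra. Qed.

Lemma zh (V : zmodType) (a b w w' : V) : (a - b) + ((w - a) - (w' - b)) = w - w'.
Proof. rewrite opprB addrC -!addrA; congr (w + _).
rewrite addrCA addrCA [b + _]addrC.
by rewrite -(addrA (- w')) subrK addrCA addNr addr0. Qed.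
Lemma zh2 (V : zmodType) (d e : V) : (d *+ 2) - (d + e) = d - e.
Proof. by rewrite mulr2n opprD addrA addrK. Qed.

Lemma res_prop (R : realType) (V : completeNormedModType R) (ip : V -> V -> R)
  (Hip : is_inner_product ip) (A : V -> set V) (g : R) (J : V -> V) :
  Defs.monotone ip A -> 0 < g -> is_resolvent A g J -> forall w w',
  `|J w - J w'| <= `|w - w'| /\ `|(J w - J w') *+ 2 - (w - w')| <= `|w - w'|.
Proof.
move=> mA g0 HJ w w'.
have [u [Au Eu]] := (HJ w (J w)).1 erefl.
have [u' [Au' Eu']] := (HJ w' (J w')).1 erefl.
have mon := mA _ _ _ _ Au Au'.
set d := J w - J w'; set e := u - u'.
have Ew : w - w' = d + g *: e.
  by rewrite /d /e scalerBr -Eu -Eu' (zh (J w) (J w') w w').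
have E2 : d *+ 2 - (w - w') = d + (- g) *: e.
  by rewrite Ew (zh2 d (g *: e)) scaleNr.
have H1 := normDZ Hip d e g.
have H2 := normDZ Hip d e (- g).
rewrite (ipC (ipl_of Hip)) in mon.
rewrite E2 Ew; split; apply: sq_le => //; rewrite ?H1 ?H2;
  have := normr_ge0 e; have := normr_ge0 d; rewrite !expr2; nra.
Qed.

Lemma z5 (V : zmodType) (X X' z z' Y Y' : V) : (X - z - Y) - (X' - z' - Y') = ((X - X') - (z - z')) - (Y - Y').
Proof. rewrite !opprD addrACA. congr (_ + _). by rewrite addrACA. Qed.
Lemma z3 (V : zmodType) (a b c : V) : (a + c) - (b + c) = a - b.
Proof. by rewrite opprD addrACA subrr addr0. Qed.
Lemma z1 (V : zmodType) (a b c : V) : a = b + (a - c) -> b = c.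
Proof. move=> h; rewrite -[b](addrK (a - c)) -h opprB addrC subrK. done. Qed.
Lemma z2 (V : zmodType) (a b c : V) : (a + c) - b = c -> a = b.
Proof.
move=> h; apply/eqP; rewrite -subr_eq0.
have <- : (a + c - b) - c = a - b by rewrite addrAC addrK.
by rewrite h subrr.
Qed.
Lemma z6 (V : zmodType) (T xC xB z : V) : T = xC + (z - xB) -> xC - xB = T - z.
Proof. by move=> h; rewrite h addrCA addrAC subrr add0r. Qed.

Lemma avg (R : realType) (V : lmodType R) (z zs n t : V) (a l : R) :
  t = (1 - a) *: z + a *: n ->
  z + l *: (t - z) - zs = (1 - l * a) *: (z - zs) + (l * a) *: (n - zs).
Proof.
move=> h.
have e1 : t - z = a *: (n - z).
  by rewrite h scalerBl scale1r scalerBr -addrA addrC addrA subrK.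
rewrite e1 scalerA addrAC scalerBl scale1r -(addrA (z - zs)) (addrC (- _)) -scalerBr.
by rewrite (z3 n z (- zs)).
Qed.

Lemma bfp (R : realType) (V : completeNormedModType R) (f : V -> V) (q : R) :
  0 <= q -> q < 1 -> (forall x y, `|f x - f y| <= q * `|x - y|) -> exists p, p = f p.
Proof.
move=> q0 q1 H.
have := @banach_fixed_point R V setT (totalfun_ setT f).
case.
- exists (NngNum q0); split => //=.
  rewrite /dominated_by /=. move=> -[x y] _ /=. exact: H.
- exact: closedT.
- by exists 0.
- by move=> p _ e; exists p.
Qed.

Lemma dom_full (R : realType) (V : completeNormedModType R) (ip : V -> V -> R)
  (Hip : is_inner_product ip) (C : V -> set V) (beta g : R) (J : V -> V) :
  Defs.cocoercive ip beta C -> 0 < beta -> 0 < g -> is_resolvent C g J ->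
  forall x0, exists u, C x0 u.
Proof.
move=> cC b0 g0 HJ x0.
pose r := g / (g + 2 * beta).
pose q := (1 + r) / 2.
have hr : r * (g + 2 * beta) = g by rewrite /r mulfVK //; lra.
have r0 : 0 <= r by rewrite /r; apply: divr_ge0; lra.
have r1 : r < 1 by rewrite /r ltr_pdivrMr; lra.
have q0 : 0 <= q by rewrite /q; lra.
have q1 : q < 1 by rewrite /q; lra.
have rq : r <= q ^+ 2 by rewrite /q expr2; nra.
clearbody q; clearbody r.
pose f := fun w => w - J w + x0.
have key : forall w w', `|f w - f w'| <= q * `|w - w'|.
  move=> w w'.
  have [u [Cu Eu]] := (HJ w (J w)).1 erefl.
  have [u' [Cu' Eu']] := (HJ w' (J w')).1 erefl.
  have coc := cC _ _ _ _ Cu Cu'.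
  set d := J w - J w' in coc *; set e := u - u' in coc *.
  have Ew : w - w' = d + g *: e.
    by rewrite /d /e scalerBr -Eu -Eu' (zh (J w) (J w') w w').
  have Ef : f w - f w' = g *: e.
    by rewrite /f (z3 (w - J w) (w' - J w') x0) Eu Eu' -scalerBr.
  rewrite (ipC (ipl_of Hip)) in coc.
  have H1 := normDZ Hip d e g.
  rewrite Ef Ew; apply: sq_le; first by apply: mulr_ge0.
  rewrite normrZ (ger0_norm (ltW g0)) !exprMn H1.
  set E := `|e| ^+ 2; set D := `|d| ^+ 2; set P := ip d e.
  have E0 : 0 <= E by rewrite /E exprn_ge0.
  have D0 : 0 <= D by rewrite /D exprn_ge0.
  have S1 : (g ^+ 2 + 2 * g * beta) * E <= D + 2 * g * P + g ^+ 2 * E.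
    have coc' : beta * E <= P by exact: coc.
    rewrite !expr2; nra.
  have S2 : g ^+ 2 * E = r * ((g ^+ 2 + 2 * g * beta) * E).
    have -> : r * ((g ^+ 2 + 2 * g * beta) * E) = (r * (g + 2 * beta)) * (g * E) by ring.
    by rewrite hr expr2 mulrA.
  rewrite {1}S2.
  have M0 : 0 <= (g ^+ 2 + 2 * g * beta) * E.
    apply: mulr_ge0 => //; rewrite expr2; nra.
  apply: (le_trans (ler_wpM2r M0 rq)).
  apply: ler_wpM2l; [exact: sqr_ge0 | exact: S1].
have [p Hp] := bfp q0 q1 key.
have HJp : J p = x0.
  apply/eqP; rewrite eq_sym -subr_eq0; apply/eqP.
  have e : p - J p + x0 - p = x0 - J p by rewrite addrC -[p - J p + x0]addrA addKr addrC.
  have Hp' : p - J p + x0 = p := esym Hp.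
  by rewrite -e Hp' subrr.
have [u [Cu _]] := (HJ p x0).1 HJp.
by exists u.
Qed.

Lemma avg_fix (R : realType) (V : lmodType R) (zs v : V) (a : R) :
  zs = (1 - a) *: zs + a *: v -> a != 0 -> v = zs.
Proof.
move=> h a0.
have : a *: (v - zs) = 0.
  rewrite scalerBr; apply/eqP; rewrite subr_eq0; apply/eqP.
  rewrite scalerBl scale1r in h.
  have e : a *: v = zs - (zs - a *: zs) by rewrite {1}h addrC addKr.
  by rewrite e opprB addrC subrK.
by move/eqP; rewrite scaler_eq0 (negbTE a0) /= subr_eq0 => /eqP.
Qed.

Theorem lemma3 (R : realType) (V : completeNormedModType R)
  (ip : V -> V -> R) (Hip : is_inner_product ip)
  (A B C : V -> set V) (beta gamma : R)
  (JA JB JC T : V -> V)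
  (z xA xB xC c : nat -> V) (lambda : nat -> R) (zstar : V) :
  maximal_monotone ip A -> maximal_monotone ip B -> maximal_monotone ip C ->
  0 < beta -> cocoercive ip beta C ->
  0 < gamma -> gamma <= 2 * beta ->
  is_resolvent A gamma JA -> is_resolvent B gamma JB -> is_resolvent C gamma JC ->
  (forall w cw, C (JB w) cw ->
     T w = JC (JA (2 *: JB w - w - gamma *: cw) + gamma *: cw) + (w - JB w)) ->
  2 * beta / (4 * beta - gamma) < 1 ->
  averaged (2 * beta / (4 * beta - gamma)) T ->
  (forall k, xB k = JB (z k)) ->
  (forall k, C (xB k) (c k)) ->
  (forall k, xA k = JA (2 *: xB k - z k - gamma *: c k)) ->
  (forall k, xC k = JC (xA k + gamma *: c k)) ->
  (forall k, z k.+1 = z k + lambda k *: (xC k - xB k)) ->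
  (forall k, 0 < lambda k < (4 * beta - gamma) / (2 * beta)) ->
  T zstar = zstar ->
  forall j,
    `|xA j - JB zstar| <= (1 + gamma / beta) * `|z 0 - zstar| /\
    `|xB j - JB zstar| <= (1 + gamma / beta) * `|z 0 - zstar|.
Proof.
move=> mA mB mC b0 cC g0 g2b HJA HJB HJC HT a1 [N [Nne HN]] Hxb Hc Hxa Hxc Hz Hl Tz j.
have Hil := ipl_of Hip.
set xs := JB zstar.
have [cs Ccs] := dom_full Hip cC b0 g0 HJC xs.
have HTs := HT zstar cs Ccs.
rewrite Tz -/xs in HTs.
have HJq := z1 HTs.
have [u [Cu Eu]] := (HJC _ xs).1 HJq.
have ucs : u = cs.
  have h := cC _ _ _ _ Cu Ccs.
  rewrite subrr (ipC Hil) (ip0l Hil) in h.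
  apply/eqP; rewrite -subr_eq0 -normr_eq0; apply/eqP.
  have h2 : `|u - cs| ^+ 2 <= 0.
    by rewrite -(pmulr_rle0 _ b0).
  have := normr_ge0 (u - cs); rewrite expr2 in h2; nra.
rewrite ucs in Eu.
have HA : JA (2 *: xs - zstar - gamma *: cs) = xs := z2 Eu.
set a := 2 * beta / (4 * beta - gamma) in a1 HN.
have a0 : 0 < a by rewrite /a divr_gt0 //; lra.
have ainv : (4 * beta - gamma) / (2 * beta) * a = 1.
  rewrite /a; field; apply/andP; split; lra.
clearbody a.
have Nzs : N zstar = zstar.
  apply: (avg_fix (a := a)); last by rewrite gt_eqF.
  by rewrite -HN Tz.
have step : forall k, `|z k.+1 - zstar| <= `|z k - zstar|.
  move=> k.
  have Ck : C (JB (z k)) (c k) by rewrite -Hxb.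
  have TK := HT _ _ Ck.
  rewrite -Hxb -Hxa -Hxc in TK.
  have E1 := z6 TK.
  have [l0 l1] := andP (Hl k).
  have la1 : lambda k * a < 1.
    by rewrite -ainv ltr_pM2r.
  have la0 : 0 < lambda k * a by apply: mulr_gt0.
  rewrite Hz E1 (avg zstar (lambda k) (HN (z k))).
  apply: (le_trans (ler_normD _ _)).
  rewrite !normrZ (gtr0_norm l0) (gtr0_norm a0) ger0_norm; last by lra.
  have hN := Nne (z k) zstar; rewrite Nzs in hN.
  have := normr_ge0 (z k - zstar); nra.
have bnd : forall k, `|z k - zstar| <= `|z 0 - zstar|.
  elim=> // k IH; exact: le_trans (step k) IH.
have Z0 := normr_ge0 (z 0 - zstar).
have gb0 : 0 <= gamma / beta by apply: divr_ge0; lra.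
have hB : `|xB j - xs| <= `|z j - zstar|.
  by rewrite Hxb; have [h _] := res_prop Hip mB.1 g0 HJB (z j) zstar; exact: h.
have hc : beta * `|c j - cs| <= `|xB j - xs|.
  have h := cC _ _ _ _ (Hc j) Ccs.
  have H1 := normDZ Hip (xB j - xs) (c j - cs) (- beta).
  rewrite (ipC Hil) in h.
  apply: sq_le => //.
  have := sqr_ge0 `|xB j - xs + (- beta) *: (c j - cs)|.
  rewrite H1 !expr2 in h *; nra.
split; last first.
  apply: (le_trans hB); apply: (le_trans (bnd j)); nra.
have E : xA j - xs = JA (2 *: xB j - z j - gamma *: c j) - JA (2 *: xs - zstar - gamma *: cs).
  by rewrite HA Hxa.
rewrite E.
have [h _] := res_prop Hip mA.1 g0 HJA (2 *: xB j - z j - gamma *: c j) (2 *: xs - zstar - gamma *: cs).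
apply: (le_trans h).
rewrite z5 -scalerBr -scalerBr scaler_nat.
apply: (le_trans (ler_normB _ _)).
have [_ h2] := res_prop Hip mB.1 g0 HJB (z j) zstar.
rewrite -Hxb in h2.
rewrite normrZ (ger0_norm (ltW g0)).
have hc' : gamma * `|c j - cs| <= gamma / beta * `|xB j - xs|.
  have -> : gamma * `|c j - cs| = gamma / beta * (beta * `|c j - cs|).
    by field; rewrite gt_eqF.
  apply: ler_wpM2l; [exact: gb0 | exact: hc].
have := bnd j.
nra.
Qed.
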